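(* There is no equilateral hyperbolic Heron triangle.
   Context: All triangles are non-degenerate, bounded triangles in the hyperbolic plane (curvature $-1$), with side lengths $a,b,c>0$, opposite angles $\alpha,\beta,\gamma>0$, and area $A=\pi-\alpha-\beta-\gamma$. A hyperbolic Heron triangle is one with $e^a,e^b,e^c\in\mathbb{Q}$ and $e^{i\alpha},e^{i\beta},e^{i\gamma},e^{iA}\in\mathbb{Q}[i]$. *)

(* Defs.v *)
(* concrete reals R. Hyperbolic plane = hyperboloid model
   H^2 = { p in R^3 | p1^2 + p2^2 - p3^2 = -1, p3 > 0 } with Minkowski form. *)
From Stdlib Require Import Reals QArith.
Open Scope R_scope.

Record pt3 := P3 { px : R; py : R; pz : R }.

Definition mink (p q : pt3) : R := px p * px q + py p * py q - pz p * pz q.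

Definition on_hyperboloid (p : pt3) : Prop := mink p p = -1 /\ 0 < pz p.

Definition arcosh (t : R) : R := ln (t + sqrt (t * t - 1)).

(* hyperbolic distance: cosh d(p,q) = - <p,q> *)
Definition hdist (p q : pt3) : R := arcosh (- mink p q).

(* unit-free tangent vector at p pointing towards q: projection of q onto T_p H^2 *)
Definition tangent (p q : pt3) : pt3 :=
  P3 (px q + mink p q * px p) (py q + mink p q * py p) (pz q + mink p q * pz p).

Definition hangle (p q r : pt3) : R :=
  let u := tangent p q in let v := tangent p r in
  acos (mink u v / (sqrt (mink u u) * sqrt (mink v v))).

(* non-degenerate: the three vertices do not lie on a common geodesic, i.e.
   (geodesics being the traces of 2-planes through 0) are linearly independent *)
Definition det3 (a b c : pt3) : R :=
  px a * (py b * pz c - pz b * py c)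
  - py a * (px b * pz c - pz b * px c)
  + pz a * (px b * py c - py b * px c).

Definition nondegenerate (a b c : pt3) : Prop := det3 a b c <> 0.

Definition is_rat (x : R) : Prop := exists q : Q, x = Q2R q.

(* e^{i t} in Q[i] *)
Definition unit_gauss (t : R) : Prop := is_rat (cos t) /\ is_rat (sin t).

Definition heron_triangle (A B C : pt3) : Prop :=
  let a := hdist B C in let b := hdist C A in let c := hdist A B in
  let al := hangle A B C in let be := hangle B C A in let ga := hangle C A B in
  is_rat (exp a) /\ is_rat (exp b) /\ is_rat (exp c) /\
  unit_gauss al /\ unit_gauss be /\ unit_gauss ga /\
  unit_gauss (PI - al - be - ga).

Definition equilateral (A B C : pt3) : Prop :=
  hdist B C = hdist C A /\ hdist C A = hdist A B.

(* Main.v *)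
Require Import Defs.
From Stdlib Require Import Reals QArith ZArith Lra Lia Psatz.
Open Scope R_scope.

Lemma mink_sym p q : mink p q = mink q p.
Proof. unfold mink; ring. Qed.

Lemma lagrange p q :
  (1 + px p * px p + py p * py p) * (1 + px q * px q + py q * py q)
  = (1 + px p * px q + py p * py q) ^ 2
    + (px p - px q) ^ 2 + (py p - py q) ^ 2 + (px p * py q - px q * py p) ^ 2.
Proof. ring. Qed.

Lemma sq_ge a b : 0 < a -> a ^ 2 >= b ^ 2 -> a >= b.
Proof.
intros ha h. destruct (Rle_or_lt b a) as [l|l]; [lra|].
exfalso. assert (b ^ 2 > a ^ 2) by (simpl; nra). lra.
Qed.

Lemma mink_le p q : on_hyperboloid p -> on_hyperboloid q -> mink p q <= -1.
Proof.
intros [hp zp] [hq zq].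
assert (Ep : pz p * pz p = 1 + px p * px p + py p * py p) by (unfold mink in hp; lra).
assert (Eq : pz q * pz q = 1 + px q * px q + py q * py q) by (unfold mink in hq; lra).
pose proof (lagrange p q) as L.
assert (H : (pz p * pz q) ^ 2 >= (1 + px p * px q + py p * py q) ^ 2).
{ replace ((pz p * pz q) ^ 2) with ((pz p * pz p) * (pz q * pz q)) by ring.
  rewrite Ep, Eq, L.
  pose proof (pow2_ge_0 (px p - px q)). pose proof (pow2_ge_0 (py p - py q)).
  pose proof (pow2_ge_0 (px p * py q - px q * py p)). lra. }
assert (zz : 0 < pz p * pz q) by (apply Rmult_lt_0_compat; lra).
assert (pz p * pz q >= 1 + px p * px q + py p * py q) by (apply sq_ge; auto).
unfold mink; lra.
Qed.

Lemma mink_eq p q : on_hyperboloid p -> on_hyperboloid q -> mink p q = -1 ->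
  px p = px q /\ py p = py q /\ pz p = pz q.
Proof.
intros [hp zp] [hq zq] e.
assert (Ep : pz p * pz p = 1 + px p * px p + py p * py p) by (unfold mink in hp; lra).
assert (Eq : pz q * pz q = 1 + px q * px q + py q * py q) by (unfold mink in hq; lra).
pose proof (lagrange p q) as L.
assert (e' : pz p * pz q = 1 + px p * px q + py p * py q) by (unfold mink in e; lra).
assert (S : (px p - px q) ^ 2 + (py p - py q) ^ 2 + (px p * py q - px q * py p) ^ 2 = 0).
{ rewrite <- Ep, <- Eq in L. 
  replace (pz p * pz p * (pz q * pz q)) with ((pz p * pz q) ^ 2) in L by ring.
  rewrite e' in L. lra. }
pose proof (pow2_ge_0 (px p - px q)). pose proof (pow2_ge_0 (py p - py q)).
pose proof (pow2_ge_0 (px p * py q - px q * py p)).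
assert (X : px p = px q) by (assert ((px p - px q) ^ 2 = 0) by lra; nra).
assert (Y : py p = py q) by (assert ((py p - py q) ^ 2 = 0) by lra; nra).
split; [exact X | split; [exact Y|]].
rewrite X, Y in Ep. nra.
Qed.

Lemma arcosh_exp t : 1 <= t -> exp (arcosh t) = t + sqrt (t * t - 1).
Proof.
intro h. unfold arcosh. apply exp_ln.
pose proof (sqrt_pos (t * t - 1)). lra.
Qed.

Lemma cosh_arcosh t : 1 <= t -> t = (exp (arcosh t) + / exp (arcosh t)) / 2.
Proof.
intro h. rewrite arcosh_exp by exact h.
set (s := sqrt (t * t - 1)).
assert (ss : s * s = t * t - 1) by (apply sqrt_sqrt; nra).
assert (s0 : 0 <= s) by apply sqrt_pos.
assert (inv : / (t + s) = t - s).
{ field_simplify_eq; [nra | lra]. }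
rewrite inv. field.
Qed.

Lemma tangent_mink p q r : mink p p = -1 ->
  mink (tangent p q) (tangent p r) = mink q r + mink p q * mink p r.
Proof.
intro h.
assert (E : mink (tangent p q) (tangent p r)
  = mink q r + 2 * mink p q * mink p r + mink p q * mink p r * mink p p).
{ unfold tangent, mink; simpl. ring. }
rewrite E, h. ring.
Qed.

Lemma hangle_eq p q r c : mink p p = -1 -> 1 < c ->
  mink p q = - c -> mink p r = - c -> mink q r = - c -> mink q q = -1 -> mink r r = -1 ->
  hangle p q r = acos (c / (c + 1)).
Proof.
intros hp hc e1 e2 e3 hq hr.
unfold hangle; simpl.
rewrite !tangent_mink by exact hp.
rewrite e1, e2, e3, hq, hr.
replace (-1 + - c * - c) with (c * c - 1) by ring.
rewrite sqrt_sqrt by nra.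
f_equal. field_simplify_eq; [ring | split; nra].
Qed.

Definition NS_prop := forall P Q m n : nat, (0 < P)%nat -> (0 < Q)%nat -> (0 < n)%nat ->
  (n * n * (P * Q * (P * P + P * Q + Q * Q)) = m * m)%nat -> False.

Lemma key_alg (no_sq_std : NS_prop) E S : 0 < E -> is_rat E -> is_rat S ->
  4 * E * (E * E + E + 1) = (S * (E + 1) * (E + 1)) ^ 2 -> False.
Proof.
intros E0 [qE hE] [qS hS] e.
destruct qE as [a1 b1]. destruct qS as [a2 b2].
unfold Q2R in hE, hS; simpl in hE, hS.
assert (b1p : 0 < IZR (Z.pos b1)) by (apply IZR_lt; lia).
assert (b2p : 0 < IZR (Z.pos b2)) by (apply IZR_lt; lia).
assert (a1p : 0 < IZR a1).
{ rewrite hE in E0. apply (Rmult_lt_reg_r (/ IZR (Z.pos b1))).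
  apply Rinv_0_lt_compat; lra. lra. }
apply lt_IZR in a1p.
set (P := Z.to_nat a1). set (Q := Pos.to_nat b1).
set (n := (2 * Pos.to_nat b2)%nat). set (m := (Z.abs_nat a2 * ((P + Q) * (P + Q)))%nat).
apply (no_sq_std P Q m n); [unfold P; lia | unfold Q; lia | unfold n; lia |].
apply INR_eq. rewrite !mult_INR, !plus_INR, !mult_INR.
assert (HP : INR P = IZR a1) by (unfold P; rewrite INR_IZR_INZ, Z2Nat.id; [reflexivity|lia]).
assert (HQ : INR Q = IZR (Z.pos b1)) by (unfold Q; rewrite INR_IZR_INZ, positive_nat_Z; reflexivity).
assert (Hn : INR n = 2 * IZR (Z.pos b2)) by (unfold n; rewrite mult_INR, (INR_IZR_INZ (Pos.to_nat b2)), positive_nat_Z; simpl; ring).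
assert (Ha : INR (Z.abs_nat a2) * INR (Z.abs_nat a2) = IZR a2 * IZR a2).
{ rewrite INR_IZR_INZ, Zabs2Nat.id_abs, abs_IZR.
  destruct (Rle_or_lt 0 (IZR a2)); [rewrite Rabs_right by lra | rewrite Rabs_left by lra]; ring. }
rewrite HP, HQ, Hn.
unfold m; rewrite !mult_INR, !plus_INR, HP, HQ.
set (k := INR (Z.abs_nat a2)) in *.
set (x := IZR a1) in *. set (y := IZR (Z.pos b1)) in *. set (z := IZR a2) in *. set (w := IZR (Z.pos b2)) in *.
replace (k * ((x + y) * (x + y)) * (k * ((x + y) * (x + y))))
  with ((k * k) * ((x + y) * (x + y)) * ((x + y) * (x + y))) by ring.
rewrite Ha.
transitivity (y ^ 4 * w ^ 2 * (4 * E * (E * E + E + 1))).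
{ rewrite hE; field; lra. }
rewrite e, hS, hE; field; lra.
Qed.

Lemma main_thm (NS : NS_prop) :
  ~ (exists A B C : pt3,
        on_hyperboloid A /\ on_hyperboloid B /\ on_hyperboloid C /\
        nondegenerate A B C /\ equilateral A B C /\ heron_triangle A B C).
Proof.
intros [A [B [C [hA [hB [hC [nd [[eq1 eq2] H]]]]]]]].
unfold heron_triangle in H; cbv zeta in H.
destruct H as [_ [_ [rAB [ug1 _]]]].
set (E := exp (hdist A B)) in *.
pose proof (mink_le A B hA hB) as kAB.
pose proof (mink_le B C hB hC) as kBC.
pose proof (mink_le C A hC hA) as kCA.
assert (cAB : - mink A B = (E + / E) / 2).
{ unfold E, hdist; apply cosh_arcosh; lra. }
assert (cBC : - mink B C = (E + / E) / 2).
{ unfold E; rewrite <- eq2, <- eq1; unfold hdist; apply cosh_arcosh; lra. }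
assert (cCA : - mink C A = (E + / E) / 2).
{ unfold E; rewrite <- eq2; unfold hdist; apply cosh_arcosh; lra. }
set (c := (E + / E) / 2) in *.
assert (c1 : 1 < c).
{ destruct (Rle_or_lt c 1) as [l|l]; [|exact l]. exfalso.
  assert (e1 : mink A B = -1) by lra.
  destruct (mink_eq A B hA hB e1) as [x1 [y1 z1]].
  apply nd. unfold det3. rewrite x1, y1, z1. ring. }
assert (E0 : 0 < E) by (unfold E; apply exp_pos).
assert (ang : hangle A B C = acos (c / (c + 1))).
{ destruct hA as [hA _]. destruct hB as [hB _]. destruct hC as [hC _].
  apply hangle_eq; try assumption; try lra.
  rewrite mink_sym; lra. }
destruct ug1 as [_ [qs hs]].
rewrite ang in hs.
set (x := c / (c + 1)) in *.
assert (x0 : 0 < x) by (unfold x; apply Rdiv_lt_0_compat; lra).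
assert (x1 : x < 1) by (unfold x; apply (Rmult_lt_reg_r (c + 1)); [lra|]; field_simplify; lra).
rewrite sin_acos in hs by lra.
set (S := Q2R qs) in *.
assert (SS : S * S = 1 - x²).
{ rewrite <- hs. apply sqrt_sqrt. unfold Rsqr. nra. }
apply (key_alg NS E S E0 rAB (ex_intro _ qs eq_refl)).
replace ((S * (E + 1) * (E + 1)) ^ 2) with ((S * S) * ((E + 1) ^ 4)) by ring.
rewrite SS. unfold x, c, Rsqr. field. split; [lra| nra].
Qed.

From mathcomp Require Import all_boot zify ring.
Local Close Scope R_scope.
Local Open Scope nat_scope.
Set Implicit Arguments. Unset Strict Implicit.

Lemma gcdX2 a b : gcdn (a ^ 2) (b ^ 2) = (gcdn a b) ^ 2.
Proof.
have [g0|gpos] := posnP (gcdn a b).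
  move/eqP: g0; rewrite eqn0Ngt gcdn_gt0 negb_or -!eqn0Ngt => /andP[/eqP-> /eqP->].
  by rewrite gcd0n.
set g := gcdn a b.
have ea : a = (a %/ g) * g by rewrite divnK // dvdn_gcdl.
have eb : b = (b %/ g) * g by rewrite divnK // dvdn_gcdr.
have cop : coprime (a %/ g) (b %/ g).
  rewrite /coprime; apply/eqP.
  have : gcdn (a %/ g * g) (b %/ g * g) = g by rewrite -ea -eb.
  rewrite -muln_gcdl => h. apply/eqP; rewrite -(eqn_pmul2r gpos) mul1n; apply/eqP; exact: h.
rewrite ea eb !expnMn -muln_gcdl.
have -> : gcdn ((a %/ g) ^ 2) ((b %/ g) ^ 2) = 1.
  by apply/eqP; apply: coprimeXl; apply: coprimeXr.
by rewrite mul1n.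
Qed.

Lemma L1 x y z : coprime x y -> x * y = z ^ 2 -> x = (gcdn x z) ^ 2.
Proof.
move=> cxy e; rewrite -gcdX2 -e expnS expn1 -muln_gcdr.
by move/eqP: cxy => ->; rewrite muln1.
Qed.

Lemma sq_split x y z : coprime x y -> x * y = z ^ 2 ->
  exists a b, x = a ^ 2 /\ y = b ^ 2.
Proof.
move=> c e; exists (gcdn x z), (gcdn y z); split; first exact: L1 c e.
by apply: (L1 (x:=y) (y:=x)); [rewrite coprime_sym | rewrite mulnC].
Qed.

Lemma sq4 x : x ^ 2 %% 4 = odd x.
Proof.
rewrite -modnXm -(odd_mod x (erefl : odd 4 = false)).
have : x %% 4 < 4 by rewrite ltn_mod.
by case: (x %% 4) => [|[|[|[|//]]]].
Qed.

Lemma pow4 x : x ^ 4 %% 8 = odd x.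
Proof.
rewrite -modnXm -(odd_mod x (erefl : odd 8 = false)).
have : x %% 8 < 8 by rewrite ltn_mod.
by case: (x %% 8) => [|[|[|[|[|[|[|[|//]]]]]]]].
Qed.

Lemma mod8 a b u : odd a || odd b -> odd u ->
  u ^ 2 + a ^ 4 + 2 * a ^ 2 * b ^ 2 <> 3 * b ^ 4.
Proof.
move=> hab hu e.
have h2 : (2 * a ^ 2 * b ^ 2) %% 8 = 2 * (odd a && odd b).
  rewrite -mulnA -expnMn (_ : 8 = 2 * 4) // -muln_modr sq4 oddM //.
have hu2 : u ^ 2 %% 8 = 1.
  rewrite -modnXm -(odd_mod u (erefl : odd 8 = false)) in hu *.
  move: hu; have : u %% 8 < 8 by rewrite ltn_mod.
  by case: (u %% 8) => [|[|[|[|[|[|[|[|//]]]]]]]].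
have : (u ^ 2 + a ^ 4 + 2 * a ^ 2 * b ^ 2) %% 8 = (3 * b ^ 4) %% 8 by rewrite e.
rewrite -modnDm -(modnDm (u^2)) h2 hu2 pow4 -modnMm pow4.
move: hab; by case: (odd a); case: (odd b).
Qed.

Lemma sqinj x y : x ^ 2 = y ^ 2 -> x = y.
Proof. by move/eqP; rewrite eqn_exp2r // => /eqP. Qed.

Lemma cop_sq x y : coprime (x ^ 2) (y ^ 2) = coprime x y.
Proof. by rewrite coprime_pexpl // coprime_pexpr. Qed.

Lemma half2 k : ~~ odd k -> k = 2 * k./2.
Proof. move=> h; have := odd_double_half k; rewrite (negbTE h) -muln2; lia. Qed.

Lemma gcd1 d x y : d %| x -> d %| y -> coprime x y -> d = 1.
Proof. by move=> hx hy /eqP c; apply/eqP; rewrite -dvdn1 -c dvdn_gcd hx hy. Qed.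

Lemma sq_odd x : odd (x ^ 2) = odd x.
Proof. by rewrite oddX. Qed.

Lemma cop_not_even u v : coprime u v -> odd u || odd v.
Proof.
move=> c; case Hu: (odd u) => //; case Hv: (odd v) => //.
suff : 2 = 1 by [].
by apply: (gcd1 (x:=u) (y:=v)); rewrite // dvdn2 ?Hu ?Hv.
Qed.

Lemma fourth X Y t : coprime X Y -> X * Y = t ^ 4 ->
  exists a b, [/\ X = a ^ 4, Y = b ^ 4, t = a * b & coprime a b].
Proof.
move=> c e.
have e' : X * Y = (t ^ 2) ^ 2 by rewrite -expnM.
have [a1 [b1 [ea eb]]] := sq_split c e'.
have e1 : a1 * b1 = t ^ 2 by apply: sqinj; rewrite expnMn -ea -eb.
have c1 : coprime a1 b1 by rewrite -cop_sq -ea -eb.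
have [a [b [ea1 eb1]]] := sq_split c1 e1.
exists a, b; split.
- by rewrite ea ea1 -expnM.
- by rewrite eb eb1 -expnM.
- by apply: sqinj; rewrite expnMn -ea1 -eb1.
- by rewrite -cop_sq -ea1 -eb1.
Qed.
Lemma step u v w : 0 < u -> 0 < v -> coprime u v -> odd u -> ~~ odd v ->
  u ^ 4 + u ^ 2 * v ^ 2 + v ^ 4 = w ^ 2 ->
  exists e f b, [/\ 0 < e, 0 < f, coprime e f, e ^ 4 + e ^ 2 * f ^ 2 + f ^ 4 = b ^ 2 & b < w].
Proof.
move=> u0 v0 cuv ou ev e.
set t := v./2.
have vt : v = 2 * t by exact: half2.
have t0 : 0 < t by lia.
have cut : coprime u t by apply: coprime_dvdr cuv; rewrite vt dvdn_mull.
have ow : odd w.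
  by rewrite -sq_odd -e vt !oddD !oddX !oddM ou.
set s := u ^ 2 + 2 * t ^ 2.
have E2 : w ^ 2 = s ^ 2 + 12 * t ^ 4 by rewrite -e vt /s; ring.
have sw : s < w.
  by rewrite -ltn_sqr E2 -[X in X < _]addn0 ltn_add2l muln_gt0 expn_gt0 t0.
have os : odd s by rewrite /s oddD sq_odd ou oddM.
set k := w - s.
have ek : ~~ odd k by rewrite /k oddB ?ow ?os //; apply: ltnW.
set A := k./2.
have wA : w = s + 2 * A by rewrite -half2 // /k; lia.
set B := A + s.
have AB : A * B = 3 * t ^ 4.
  have : (s + 2 * A) ^ 2 = s ^ 2 + 12 * t ^ 4 by rewrite -wA.
  have -> : (s + 2 * A) ^ 2 = s ^ 2 + 4 * (A * B) by rewrite /B; ring.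
  move/addnI; lia.
have A0 : 0 < A.
  case: (posnP A) => // A0; move: AB; rewrite A0 mul0n => /esym /eqP.
  by rewrite muln_eq0 expn_eq0 /= (negbTE (lt0n_neq0 t0)).
have c3 : ~~ (3 %| gcdn A B).
  apply/negP => h3.
  have h3A : 3 %| A by apply: dvdn_trans h3 (dvdn_gcdl _ _).
  have h3B : 3 %| B by apply: dvdn_trans h3 (dvdn_gcdr _ _).
  have : 3 * 3 %| 3 * t ^ 4 by rewrite -AB dvdn_mul.
  rewrite dvdn_pmul2l // Euclid_dvdX // andbT => h3t.
  have : 3 %| gcdn u t.
    rewrite dvdn_gcd h3t andbT.
    have hs : 3 %| s by move: h3B; rewrite /B dvdn_addr.
    have h3t2 : 3 %| 2 * t ^ 2 by apply: dvdn_mull; rewrite Euclid_dvdX // h3t.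
    by move: hs; rewrite /s (dvdn_addl _ h3t2) Euclid_dvdX // => /andP[].
  by move/eqP: cut => ->.
have cAB : coprime A B.
  set g := gcdn A B.
  have cgt : coprime g t.
    apply/eqP/(gcd1 (x := u ^ 2) (y := t)); first last.
    - by rewrite coprime_pexpl.
    - exact: dvdn_gcdr.
    have hA : gcdn g t %| A by apply: dvdn_trans (dvdn_gcdl _ _) (dvdn_gcdl _ _).
    have hB : gcdn g t %| B by apply: dvdn_trans (dvdn_gcdl _ _) (dvdn_gcdr _ _).
    have hs : gcdn g t %| s by move: hB; rewrite /B dvdn_addr.
    move: hs; rewrite /s dvdn_addl //.
    by apply: dvdn_mull; apply: dvdn_trans (dvdn_gcdr _ _) _; rewrite dvdn_exp.
  have g3 : g %| 3.
    have : g %| 3 * t ^ 4 by rewrite -AB dvdn_mull // dvdn_gcdr.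
    by rewrite Gauss_dvdl // coprimeXr.
  have : coprime g 3 by rewrite coprime_sym prime_coprime.
  by rewrite /coprime (gcdn_idPl g3).
have : 3 %| A * B by rewrite AB dvdn_mulr.
rewrite Euclid_dvdM // => /orP [h3|h3]; last first.
  (* case 3 | B : impossible mod 8 *)
  set B' := B %/ 3.
  have eB : B = 3 * B' by rewrite mulnC divnK.
  have AB' : A * B' = t ^ 4.
    apply/eqP; rewrite -(eqn_pmul2l (_ : 0 < 3)) //; apply/eqP.
    by rewrite mulnCA -eB AB.
  have cAB' : coprime A B' by apply: coprime_dvdr cAB; rewrite eB dvdn_mull.
  have [a [b [ea eb' et cab]]] := fourth cAB' AB'.
  exfalso; apply: (mod8 (cop_not_even cab) ou).
  move: eB; rewrite /B eb' ea /s et expnMn; lia.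
set A' := A %/ 3.
have eA : A = 3 * A' by rewrite mulnC divnK.
have AB' : A' * B = t ^ 4.
  apply/eqP; rewrite -(eqn_pmul2l (_ : 0 < 3)) //; apply/eqP.
  by rewrite mulnA -eA AB.
have cAB' : coprime A' B by apply: coprime_dvdl cAB; rewrite eA dvdn_mull.
have [a [b [ea eb et cab]]] := fourth cAB' AB'.
have a0 : 0 < a by move: t0; rewrite et muln_gt0 => /andP[].
have b0 : 0 < b by move: t0; rewrite et muln_gt0 => /andP[].
set P := a ^ 2. set Q := b ^ 2.
have P0 : 0 < P by rewrite expn_gt0 a0.
have eQ : Q * Q = 3 * P * P + u ^ 2 + 2 * P * Q.
  rewrite /Q (_ : b ^ 2 * b ^ 2 = b ^ 4); last by rewrite -expnD.
  rewrite -eb /B eA ea /s et /P expnMn; ring.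
have u2 : 0 < u ^ 2 by rewrite expn_gt0 u0.
have PQ : 3 * P < Q.
  rewrite ltnNge; apply/negP => h.
  have h1 : Q * Q <= (3 * P) * Q by rewrite leq_mul2r h orbT.
  have h2 : P * Q <= P * (3 * P) by rewrite leq_mul2l h orbT.
  lia.
set Y := Q - 3 * P.
have eY : Q = Y + 3 * P by rewrite /Y subnK // ltnW.
set X := Y + 4 * P.
have XY : X * Y = u ^ 2.
  apply/eqP; rewrite -(eqn_add2r (3 * P * P + 2 * P * Q)); apply/eqP.
  rewrite (_ : u ^ 2 + (3 * P * P + 2 * P * Q) = Q * Q); last by rewrite eQ; ring.
  rewrite /X eY; ring.
have oXY : odd X && odd Y by rewrite -oddM XY sq_odd.
case/andP: oXY => oX oY.
have cXY : coprime X Y.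
  set g := gcdn X Y.
  have gX : g %| X := dvdn_gcdl _ _.
  have gY : g %| Y := dvdn_gcdr _ _.
  have og : odd g.
    case og: (odd g) => //.
    have h2 : 2 %| X by apply: dvdn_trans gX; rewrite dvdn2 og.
    by move: oX; rewrite -[odd X]negbK -dvdn2 h2.
  have c4 : coprime g 4 by rewrite (_ : 4 = 2 ^ 2) // coprime_pexpr // coprimen2.
  have gP : g %| P.
    by rewrite -(Gauss_dvdr _ c4); move: gX; rewrite /X dvdn_addr.
  have gQ : g %| Q.
    rewrite -(Gauss_dvdr _ c4) (_ : 4 * Q = 3 * X + Y); last by rewrite /X eY; ring.
    by rewrite dvdn_add // dvdn_mull.
  by apply/eqP; apply: (gcd1 gP gQ); rewrite /P /Q cop_sq.
have [c [d [eX eY2]]] := sq_split cXY XY.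
have oc : odd c by rewrite -sq_odd -eX.
have od : odd d by rewrite -sq_odd -eY2.
have dc : d < c.
  rewrite -ltn_sqr -eX -eY2 /X; lia.
have ek2 : ~~ odd (c - d) by rewrite oddB ?oc ?od // ltnW.
set F := (c - d)./2.
have cF : c = d + 2 * F by rewrite -half2 //; lia.
set E := d + F.
have EF : E * F = P.
  have h : X = Y + 4 * P by [].
  move: h; rewrite eX eY2 cF /E => h.
  apply/eqP; rewrite -(eqn_pmul2l (_ : 0 < 4)) //; apply/eqP.
  apply/eqP; rewrite -(eqn_add2l (d ^ 2)); apply/eqP; rewrite -h; ring.
have cPQ : coprime P Q by rewrite /P /Q cop_sq.
have cEF : coprime E F.
  set h := gcdn E F.
  have hE : h %| E := dvdn_gcdl _ _.
  have hF : h %| F := dvdn_gcdr _ _.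
  have hd : h %| d by move: hE; rewrite /E (dvdn_addl _ hF).
  have hc : h %| c by rewrite cF dvdn_add // dvdn_mull.
  have hP : h %| P by rewrite -EF dvdn_mulr.
  have hX : h %| X by rewrite eX dvdn_mulr.
  have hQ : h %| Q.
    have eXQ : X = Q + P by rewrite /X eY; lia.
    by move: hX; rewrite eXQ (dvdn_addl _ hP).
  by apply/eqP; apply: (gcd1 hP hQ).
have EFa : E * F = a ^ 2 by [].
have [e1 [f1 [eE eF]]] := sq_split cEF EFa.
have aef : a = e1 * f1 by apply: sqinj; rewrite expnMn -eE -eF.
have F0 : 0 < F.
  rewrite lt0n; apply/negP => /eqP F0.
  by move: dc; rewrite cF F0 muln0 addn0 ltnn.
have E0 : 0 < E by rewrite /E; lia.
exists e1, f1, b; split.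
- by rewrite -(ltn_exp2r _ _ (isT : 0 < 2)) -eE.
- by rewrite -(ltn_exp2r _ _ (isT : 0 < 2)) -eF.
- by rewrite -cop_sq -eE -eF.
- have h1 : c = e1 ^ 2 + f1 ^ 2 by rewrite cF -eE -eF /E; lia.
  have h2 : c ^ 2 = Q + P by rewrite -eX /X eY; lia.
  apply/eqP; rewrite -(eqn_add2r (e1 ^ 2 * f1 ^ 2)); apply/eqP.
  rewrite (_ : b ^ 2 + e1 ^ 2 * f1 ^ 2 = c ^ 2); last by rewrite h2 /P aef expnMn.
  rewrite h1; ring.
- have bt : b <= t by rewrite et leq_pmull.
  have tt : t <= t ^ 2 by rewrite -{1}(expn1 t) leq_pexp2l.
  by rewrite wA /s; lia.
Qed.

Lemma pow4m4 x : x ^ 4 %% 4 = odd x.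
Proof. by rewrite (_ : x ^ 4 = (x ^ 2) ^ 2) ?sq4 ?sq_odd // -expnM. Qed.

Lemma descent w : forall u v, 0 < u -> 0 < v -> coprime u v ->
  u ^ 4 + u ^ 2 * v ^ 2 + v ^ 4 = w ^ 2 -> False.
Proof.
elim/ltn_ind: w => w IH u v u0 v0 c e.
have := cop_not_even c.
case ou: (odd u); case ov: (odd v) => // _.
- have : (u ^ 4 + u ^ 2 * v ^ 2 + v ^ 4) %% 4 = w ^ 2 %% 4 by rewrite e.
  rewrite -modnDm -(modnDm (u ^ 4)) !pow4m4 -expnMn sq4 oddM ou ov sq4.
  by case: (odd w).
- have [e1 [f1 [b [e0 f0 cef eb bw]]]] := step u0 v0 c ou (negbT ov) e.
  exact: (IH b bw e1 f1).
- have e' : v ^ 4 + v ^ 2 * u ^ 2 + u ^ 4 = w ^ 2 by rewrite -e; lia.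
  have c' : coprime v u by rewrite coprime_sym.
  have [e1 [f1 [b [e0 f0 cef eb bw]]]] := step v0 u0 c' ov (negbT ou) e'.
  exact: (IH b bw e1 f1).
Qed.

Lemma gcd_split p q : 0 < gcdn p q ->
  exists p' q', [/\ p = p' * gcdn p q, q = q' * gcdn p q & coprime p' q'].
Proof.
move=> gpos; set g := gcdn p q.
have ea : p = (p %/ g) * g by rewrite divnK // dvdn_gcdl.
have eb : q = (q %/ g) * g by rewrite divnK // dvdn_gcdr.
exists (p %/ g), (q %/ g); split => //.
rewrite /coprime; apply/eqP.
have : gcdn (p %/ g * g) (q %/ g * g) = g by rewrite -ea -eb.
rewrite -muln_gcdl => h. apply/eqP; rewrite -(eqn_pmul2r gpos) mul1n; apply/eqP; exact: h.
Qed.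

Lemma no_sq p q m n : 0 < p -> 0 < q -> 0 < n ->
  n ^ 2 * (p * q * (p ^ 2 + p * q + q ^ 2)) = m ^ 2 -> False.
Proof.
move=> p0 q0 n0 e.
have gpos : 0 < gcdn p q by rewrite gcdn_gt0 p0.
have [p' [q' [ep eq cpq]]] := gcd_split gpos.
set g := gcdn p q in ep eq gpos.
have p'0 : 0 < p' by move: p0; rewrite ep muln_gt0 => /andP[].
have q'0 : 0 < q' by move: q0; rewrite eq muln_gt0 => /andP[].
set S := p' ^ 2 + p' * q' + q' ^ 2.
have e2 : (n * g ^ 2) ^ 2 * (p' * q' * S) = m ^ 2.
  by rewrite -e ep eq /S; ring.
have ng0 : 0 < n * g ^ 2 by rewrite muln_gt0 n0 expn_gt0 gpos.
have dv : n * g ^ 2 %| m.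
  by rewrite -(dvdn_pexp2r _ _ (isT : 0 < 2)) -e2 dvdn_mulr.
set k := m %/ (n * g ^ 2).
have em : m = k * (n * g ^ 2) by rewrite divnK.
have e3 : p' * q' * S = k ^ 2.
  apply/eqP; rewrite -(eqn_pmul2l (_ : 0 < (n * g ^ 2) ^ 2)) ?expn_gt0 ?ng0 //.
  by apply/eqP; rewrite e2 em expnMn mulnC.
have cS : coprime (p' * q') S.
  rewrite coprimeMl; apply/andP; split.
  - rewrite /coprime /S (_ : p' ^ 2 + p' * q' + q' ^ 2 = (p' + q') * p' + q' ^ 2);
      last by ring.
    by rewrite gcdnMDl; apply: coprimeXr.
  - rewrite /coprime /S (_ : p' ^ 2 + p' * q' + q' ^ 2 = (p' + q') * q' + p' ^ 2);
      last by ring.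
    by rewrite gcdnMDl; apply: coprimeXr; rewrite coprime_sym.
have [h [j [eh ej]]] := sq_split cS e3.
have [u [v [eu ev]]] := sq_split cpq eh.
apply: (descent (w := j) (u := u) (v := v)).
- by rewrite -(ltn_exp2r _ _ (isT : 0 < 2)) -eu.
- by rewrite -(ltn_exp2r _ _ (isT : 0 < 2)) -ev.
- by rewrite -cop_sq -eu -ev.
- by rewrite -ej /S eu ev -!expnM -expnMn.
Qed.

Unset Implicit Arguments.

Lemma NS : NS_prop.
Proof.
move=> P Q m n hP hQ hn e.
apply: (no_sq (p := P) (q := Q) (m := m) (n := n)).
- by apply/ltP.
- by apply/ltP.
- by apply/ltP.
- rewrite !expnS !expn0 !muln1; exact: e.
Qed.

Theorem proposition4p1 :
  ~ (exists A B C : pt3,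
        on_hyperboloid A /\ on_hyperboloid B /\ on_hyperboloid C /\
        nondegenerate A B C /\ equilateral A B C /\ heron_triangle A B C).
Proof. exact: (main_thm NS). Qed.
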